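(* Let $n\ge 2$, let $\alpha_1,\dots,\alpha_n>0$ be ordinals, let $i\in[1,n]$ and let $\alpha_i'>\alpha_i$. Then $$\mathbf{w}(\omega^{\alpha_1}\times\dots\times\omega^{\alpha_i}\times\dots\times\omega^{\alpha_n})<\mathbf{w}(\omega^{\alpha_1}\times\dots\times\omega^{\alpha_i'}\times\dots\times\omega^{\alpha_n}).$$
   Context: Products have the componentwise order. The width $\mathbf{w}(A)$ of a wqo $A$ is the rank of the forest of nonempty finite sequences of pairwise incomparable elements of $A$ ordered by initial segment. *)

(* Defs.v *)
From mathcomp Require Import all_boot.
Set Implicit Arguments. Unset Strict Implicit. Unset Printing Implicit Defensive.

(* Ordinals given concretely as well-ordered types.                   *)
Record wellorder := WellOrder {
  wo_car :> Type;
  wo_lt : wo_car -> wo_car -> Prop;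
  wo_irr : forall x, ~ wo_lt x x;
  wo_trans : forall x y z, wo_lt x y -> wo_lt y z -> wo_lt x z;
  wo_total : forall x y, wo_lt x y \/ x = y \/ wo_lt y x;
  wo_wf : well_founded wo_lt }.

Definition ord_eq (A B : wellorder) : Prop :=
  exists f : A -> B,
    (forall x y, wo_lt x y <-> wo_lt (f x) (f y)) /\ (forall z, exists x, f x = z).

Definition ord_lt (A B : wellorder) : Prop :=
  exists (b : B) (f : A -> B),
    (forall x y, wo_lt x y <-> wo_lt (f x) (f y)) /\
    (forall z, wo_lt z b <-> exists x, f x = z).

Definition ord_pos (A : wellorder) : Prop := inhabited A.

(* omega^A via Cantor normal form: finite non-increasing sequences of  *)
(* elements of A (w^b1 + ... + w^bk, b1 >= ... >= bk), ordered         *)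
(* lexicographically (a proper prefix being smaller).                 *)
Fixpoint nonincr (A : wellorder) (s : seq A) : Prop :=
  match s with
  | x :: ((y :: _) as t) => ~ wo_lt x y /\ nonincr t
  | _ => True
  end.

Fixpoint lexlt (A : wellorder) (s t : seq A) : Prop :=
  match s, t with
  | [::], _ :: _ => True
  | x :: s', y :: t' => wo_lt x y \/ (x = y /\ lexlt s' t')
  | _, _ => False
  end.

Definition omega_pow (A : wellorder) : Type := {s : seq A | nonincr s}.

Definition omega_pow_le (A : wellorder) (a b : omega_pow A) : Prop :=
  lexlt (proj1_sig a) (proj1_sig b) \/ proj1_sig a = proj1_sig b.

Definition prod_omega (n : nat) (W : 'I_n -> wellorder) : Type :=
  forall j : 'I_n, omega_pow (W j).

Definition prod_omega_le (n : nat) (W : 'I_n -> wellorder)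
  (x y : prod_omega W) : Prop := forall j, omega_pow_le (x j) (y j).

(* Set-theoretic (Aczel/Brouwer-style) ordinals, used for ranks.       *)
(* [osup I f] denotes the least ordinal strictly above every f i,      *)
(* i.e. sup_i (f i + 1).                                              *)
Inductive Ord : Type := osup : forall I1 : Type, (I1 -> Ord) -> Ord.

Fixpoint ole (a b : Ord) {struct a} : Prop :=
  match a, b with
  | @osup I1 f, @osup J1 g => forall i, exists j, ole (f i) (g j)
  end.

Definition olt (a b : Ord) : Prop :=
  match b with @osup J1 g => exists j, ole a (g j) end.

(* Rank in a (well-founded) forest: [child y x] means y is a child of x.
   rank x = sup { rank y + 1 | y child of x }. *)
Inductive has_rank (X : Type) (child : X -> X -> Prop) : X -> Ord -> Prop :=
| HasRank : forall x (f : {y | child y x} -> Ord),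
    (forall y, has_rank child (proj1_sig y) (f y)) ->
    has_rank child x (osup f).

Definition forest_rank (X : Type) (child : X -> X -> Prop) (o : Ord) : Prop :=
  exists f : X -> Ord, (forall x, has_rank child x (f x)) /\ o = osup f.

Definition incomparable (X : Type) (le : X -> X -> Prop) (x y : X) : Prop :=
  ~ le x y /\ ~ le y x.

Fixpoint all_incomp (X : Type) (le : X -> X -> Prop) (x : X) (s : seq X) : Prop :=
  match s with [::] => True | y :: t => incomparable le x y /\ all_incomp le x t end.

Fixpoint antichain_seq (X : Type) (le : X -> X -> Prop) (s : seq X) : Prop :=
  match s with [::] => True | x :: t => all_incomp le x t /\ antichain_seq le t end.

Definition antichain_node (X : Type) (le : X -> X -> Prop) : Type :=
  {s : seq X | s <> [::] /\ antichain_seq le s}.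

Definition node_child (X : Type) (le : X -> X -> Prop)
  (t s : antichain_node le) : Prop :=
  exists u : seq X, u <> [::] /\ proj1_sig t = proj1_sig s ++ u.

Definition width_is (X : Type) (le : X -> X -> Prop) (o : Ord) : Prop :=
  forest_rank (@node_child X le) o.

(* Main.v *)
Require Import Defs.
From Stdlib Require Import Classical ClassicalEpsilon.
From mathcomp Require Import all_boot.
Set Implicit Arguments. Unset Strict Implicit. Unset Printing Implicit Defensive.

Lemma lexlt_irr (A : wellorder) (s : seq A) : ~ lexlt s s.
Proof. elim: s => [|x s IH] //= [H|[_ H]]; [exact: (wo_irr H) | exact: IH]. Qed.

Lemma lexlt_trans (A : wellorder) (s t u : seq A) : lexlt s t -> lexlt t u -> lexlt s u.
Proof.
elim: s t u => [|x s IH] [|y t] [|z u] //=; try tauto.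
move=> [H1|[E1 H1]] [H2|[E2 H2]].
- left; exact: wo_trans H1 H2.
- left; by rewrite -E2.
- left; by rewrite E1.
- right; split; [by rewrite E1|exact: IH H1 H2].
Qed.

Lemma lexlt_total (A : wellorder) (s t : seq A) : lexlt s t \/ s = t \/ lexlt t s.
Proof.
elim: s t => [|x s IH] [|y t] /=; auto.
case: (wo_total x y) => [H|[E|H]]; auto.
subst y; case: (IH t) => [H|[E|H]].
- by left; right.
- by right; left; rewrite E.
- by right; right; right.
Qed.

Lemma exists_min (X : Type) (lt le : X -> X -> Prop) :
  well_founded lt -> (forall x y, lt x y \/ le y x) ->
  forall P : X -> Prop, forall y, P y -> exists m, P m /\ forall z, P z -> le m z.
Proof.
move=> wf tot P y; elim: (wf y) => {}y _ IH Py.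
case: (classic (exists z, P z /\ lt z y)) => [[z [Pz lzy]]|N].
- exact: IH lzy Pz.
- exists y; split => // z Pz; case: (tot z y) => // lzy; exfalso; apply: N; eauto.
Qed.

Definition good (X : Type) (le : X -> X -> Prop) :=
  forall f : nat -> X, exists phi : nat -> nat,
    (forall a b, a < b -> phi a < phi b) /\
    (forall a b, a < b -> le (f (phi a)) (f (phi b))).

Lemma incr_of_step (phi : nat -> nat) : (forall k, phi k < phi k.+1) ->
  forall a b, a < b -> phi a < phi b.
Proof.
move=> H a; elim=> [|b IH] //; rewrite ltnS leq_eqVlt => /orP [/eqP->|/IH h] //.
exact: ltn_trans h (H b).
Qed.

Lemma mono_good (X : Type) (lt le : X -> X -> Prop) :
  well_founded lt -> (forall x y, lt x y \/ le y x) -> good le.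
Proof.
move=> wf tot f.
have HM : forall c, exists m, c <= m /\ forall j, c <= j -> le (f m) (f j).
  move=> c.
  have [y [[m [cm Em]] Hy]] := @exists_min X lt le wf tot (fun y => exists j, c <= j /\ f j = y)
     (f c) (ex_intro _ c (conj (leqnn c) erefl)).
  exists m; split => // j cj; rewrite Em; apply: Hy; by exists j.
pose M c := proj1_sig (constructive_indefinite_description _ (HM c)).
have M1 : forall c, c <= M c by move=> c; rewrite /M; case: constructive_indefinite_description => m [].
have M2 : forall c j, M c <= j -> le (f (M c)) (f j).
  move=> c j; rewrite /M; case: constructive_indefinite_description => m [cm H] /= mj.
  apply: H; exact: leq_trans mj.
pose phi := fix g k := match k with 0 => M 0 | k'.+1 => M (g k').+1 end.
have step : forall k, phi k < phi k.+1 by move=> k; exact: M1.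
have Hm : forall k j, phi k <= j -> le (f (phi k)) (f j) by case=> [|k] j; apply: M2.
exists phi; split; first exact: incr_of_step.
move=> a b ab; apply: Hm; apply: ltnW; exact: incr_of_step.
Qed.

Lemma prod_good (n : nat) (T : 'I_n -> Type) (le : forall j, T j -> T j -> Prop) :
  (forall j, good (le j)) -> good (fun x y : (forall j, T j) => forall j, le j (x j) (y j)).
Proof.
move=> Hg f.
suff : forall m, exists phi : nat -> nat, (forall a b, a < b -> phi a < phi b) /\
  forall j : 'I_n, j < m -> forall a b, a < b -> le j (f (phi a) j) (f (phi b) j).
  move=> /(_ n) [phi [H1 H2]]; exists phi; split => // a b ab j; exact: H2.
elim=> [|m [phi [H1 H2]]]; first by exists id.
case: (ltnP m n) => mn; last first.
  exists phi; split => // j jm; apply: H2; exact: leq_trans (ltn_ord j) mn.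
have [psi [P1 P2]] := Hg (Ordinal mn) (fun a => f (phi a) (Ordinal mn)).
exists (fun a => phi (psi a)); split; first by move=> a b ab; apply: H1; apply: P1.
move=> j; rewrite ltnS leq_eqVlt => /orP [/eqP jm|jm] a b ab.
- have -> : j = Ordinal mn by apply: val_inj.
  exact: P2.
- apply: H2 => //; exact: P1.
Qed.

Definition Rn (A : wellorder) (s t : seq A) := nonincr s /\ lexlt s t.

Lemma acc_nil (A : wellorder) : Acc (@Rn A) [::].
Proof. constructor => t [_ H]; by case: t H. Qed.

Lemma nonincr_tail (A : wellorder) (x : A) s : nonincr (x :: s) -> nonincr s.
Proof. by case: s => //= y s [_ H]. Qed.

Definition hd_le (A : wellorder) (x : A) (s : seq A) :=
  match s with [::] => True | y :: _ => ~ wo_lt x y end.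
Definition hd_lt (A : wellorder) (x : A) (s : seq A) :=
  match s with [::] => True | y :: _ => wo_lt y x end.

Lemma acc_omega (A : wellorder) : forall s : seq A, nonincr s -> Acc (@Rn A) s.
Proof.
have C : forall x : A, forall s, nonincr s -> hd_le x s -> Acc (@Rn A) s.
  move=> x; elim: (wo_wf x) => {}x _ IHx.
  have D : forall s, nonincr s -> hd_lt x s -> Acc (@Rn A) s.
    case=> [|y s] Hn H; first exact: acc_nil.
    apply: (IHx y H) => //=; exact: wo_irr.
  have Q : forall u, Acc (@Rn A) u -> Acc (@Rn A) (x :: u).
    move=> u; elim => {}u _ IHu; constructor => t [Hn Hlt].
    case: t Hn Hlt => [|y t] Hn /= Hlt; first exact: acc_nil.
    case: Hlt => [Hyx|[Eyx Htu]].
    - exact: D.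
    - subst y; apply: IHu; split => //; exact: nonincr_tail Hn.
  elim=> [|y s IHs] Hn Hh; first exact: acc_nil.
  case: (wo_total y x) => [Hyx|[Eyx|Hxy]].
  - exact: D.
  - subst y; apply: Q; apply: IHs; first exact: nonincr_tail Hn.
    clear -Hn; move: Hn; case: s => //= z s [Hz _]; exact: Hz.
  - by case: Hh.
case=> [|y s] Hn; first exact: acc_nil.
apply: (C y) => //; exact: wo_irr.
Qed.

Definition opl (A : wellorder) (a b : omega_pow A) := lexlt (proj1_sig a) (proj1_sig b).

Lemma opl_wf (A : wellorder) : well_founded (@opl A).
Proof.
move=> a.
suff H : forall s, Acc (@Rn A) s -> forall a : omega_pow A, proj1_sig a = s -> Acc (@opl A) a.
  exact: (H (proj1_sig a) (acc_omega (proj2_sig a)) a erefl).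
move=> s; elim=> {}s _ IH b Eb; constructor => c Hc.
apply: (IH (proj1_sig c) _ c erefl); split; [exact: (proj2_sig c)| rewrite -Eb; exact Hc].
Qed.

Lemma omega_good (A : wellorder) : good (@omega_pow_le A).
Proof.
apply: (@mono_good _ (@opl A)); first exact: opl_wf.
move=> x y; rewrite /opl /omega_pow_le.
case: (lexlt_total (proj1_sig x) (proj1_sig y)) => [H|[H|H]].
- by left.
- by right; right.
- by right; left.
Qed.

Lemma prod_omega_good n (W : 'I_n -> wellorder) : good (@prod_omega_le n W).
Proof.
have H := @prod_good n (fun j => omega_pow (W j)) (fun j => @omega_pow_le (W j)) (fun j => @omega_good (W j)).
exact H.
Qed.

Lemma all_incomp_nth (X : Type) (le : X -> X -> Prop) x t x0 c :
  all_incomp le x t -> c < size t -> incomparable le x (nth x0 t c).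
Proof. elim: t c => [|y t IH] [|c] //= [H1 H2] h; auto. Qed.

Lemma antichain_nth (X : Type) (le : X -> X -> Prop) s x0 a b :
  antichain_seq le s -> a < b -> b < size s -> incomparable le (nth x0 s a) (nth x0 s b).
Proof.
elim: s a b => [|x s IH] a b //= [H1 H2] ab bs.
case: b ab bs => [|b] // ab bs; case: a ab => [|a] ab /=.
- exact: all_incomp_nth.
- exact: IH.
Qed.

Lemma node_acc (X : Type) (le : X -> X -> Prop) :
  (forall f : nat -> X, exists a b, a < b /\ le (f a) (f b)) ->
  forall s : antichain_node le, Acc (@node_child X le) s.
Proof.
move=> Hg s0; apply: NNPP => N0.
have step : forall s : {s | ~ Acc (@node_child X le) s},
    exists t : {s | ~ Acc (@node_child X le) s}, node_child (proj1_sig t) (proj1_sig s).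
  move=> [s Ns] /=; apply: NNPP => N; apply: Ns; constructor => t ts.
  apply: NNPP => Nt; apply: N; by exists (exist _ t Nt).
pose st s := proj1_sig (constructive_indefinite_description _ (step s)).
have Hst : forall s, node_child (proj1_sig (st s)) (proj1_sig s).
  move=> s; rewrite /st; by case: constructive_indefinite_description.
pose S k := iter k st (exist _ s0 N0).
pose L k := proj1_sig (proj1_sig (S k)).
have HL : forall k, exists u, u <> [::] /\ L k.+1 = L k ++ u.
  move=> k; exact: (Hst (S k)).
have Hsz : forall k, k < size (L k).
  elim=> [|k IH].
  - rewrite /L /=; case: (proj2_sig s0) => H _; move: H; case: (proj1_sig s0) => //.
  - have [u [un ->]] := HL k; rewrite size_cat; case: u un => // y u _ /=.
    rewrite addnS ltnS; exact: leq_trans IH (leq_addr _ _).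
have Hpre : forall k d, exists w, L (d + k) = L k ++ w.
  move=> k; elim=> [|d [w IH]]; first by exists [::]; rewrite cats0.
  have [u [_ Hu]] := HL (d + k); exists (w ++ u); by rewrite addSn Hu IH catA.
have Hac : forall k, antichain_seq le (L k) by move=> k; exact: (proj2 (proj2_sig (proj1_sig (S k)))).
have [x0 _] : exists x0 : X, True.
  case: (proj2_sig s0) => H _; move: H; case: (proj1_sig s0) => // x s _; by exists x.
have [a [b [ab Hab]]] := Hg (fun m => nth x0 (L m) m).
have [w Hw] := Hpre a (b - a).
have Eb : b - a + a = b by rewrite subnK // ltnW.
rewrite Eb in Hw.
have := antichain_nth x0 (Hac b) ab (Hsz b).
rewrite Hw nth_cat (Hsz a) -Hw => [[H _]]; exact: H.
Qed.

Lemma rank_exists (X : Type) (child : X -> X -> Prop) x :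
  Acc child x -> exists o, has_rank child x o.
Proof.
elim=> {}x _ IH.
have H : forall y : {y | child y x}, exists o, has_rank child (proj1_sig y) o.
  move=> [y hy]; exact: IH.
exists (osup (fun y => proj1_sig (constructive_indefinite_description _ (H y)))).
constructor => y; by case: constructive_indefinite_description.
Qed.

Lemma width_exists (X : Type) (le : X -> X -> Prop) :
  good le -> exists o, width_is le o.
Proof.
move=> Hg.
have Hacc : forall s, Acc (@node_child X le) s.
  apply: node_acc => f; have [phi [H1 H2]] := Hg f; exists (phi 0), (phi 1); split; auto.
have H : forall s, exists o, has_rank (@node_child X le) s o by move=> s; exact: rank_exists.
exists (osup (fun s => proj1_sig (constructive_indefinite_description _ (H s)))).
exists (fun s => proj1_sig (constructive_indefinite_description _ (H s))); split => //.
move=> s; by case: constructive_indefinite_description.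
Qed.

Lemma rank_sim (X Y : Type) (cX : X -> X -> Prop) (cY : Y -> Y -> Prop) (R : X -> Y -> Prop) :
  (forall a b a', R a b -> cX a' a -> exists b', cY b' b /\ R a' b') ->
  forall a oa, has_rank cX a oa -> forall b ob, has_rank cY b ob -> R a b -> ole oa ob.
Proof.
move=> Hs a oa; elim=> {}a f _ IH b ob Hb Rab; case: Hb Rab => {}b g Hg Rab /=.
move=> [a' ha']; have [b' [hb' R']] := Hs _ _ _ Rab ha'.
exists (exist _ b' hb'); exact: (IH (exist _ a' ha') b' _ (Hg (exist _ b' hb')) R').
Qed.

Lemma incomp_refl (X Y : Type) (leX : X -> X -> Prop) (leY : Y -> Y -> Prop) (e : X -> Y) :
  (forall a b, leY (e a) (e b) -> leX a b) ->
  forall a b, incomparable leX a b -> incomparable leY (e a) (e b).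
Proof. move=> He a b [h1 h2]; split => h; [apply: h1 | apply: h2]; exact: He. Qed.

Lemma map_antichain (X Y : Type) (leX : X -> X -> Prop) (leY : Y -> Y -> Prop) (e : X -> Y) :
  (forall a b, leY (e a) (e b) -> leX a b) ->
  forall s, antichain_seq leX s -> antichain_seq leY (map e s).
Proof.
move=> He; elim=> [|x s IH] //= [h1 h2]; split; last exact: IH.
elim: s {IH h2} h1 => [|y s IH] /=; first by move=> _.
move=> [h1 h2]; split; [exact: (incomp_refl He h1) | exact: IH].
Qed.

Lemma node_img (X Y : Type) (leX : X -> X -> Prop) (leY : Y -> Y -> Prop) (e : X -> Y) (x : Y) :
  (forall a b, leY (e a) (e b) -> leX a b) ->
  (forall a, incomparable leY x (e a)) ->
  forall s, antichain_seq leX s -> (x :: map e s) <> [::] /\ antichain_seq leY (x :: map e s).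
Proof.
move=> He Hx s Hs; split => //=; split; last exact: (map_antichain He Hs).
clear Hs; elim: s => [|y s IH] /=; first by [].
split; [exact: Hx | exact: IH].
Qed.

Lemma width_lt (X Y : Type) (leX : X -> X -> Prop) (leY : Y -> Y -> Prop) (e : X -> Y) (x : Y) :
  (forall a b, leY (e a) (e b) -> leX a b) ->
  (forall a, incomparable leY x (e a)) ->
  forall o o', width_is leX o -> width_is leY o' -> olt o o'.
Proof.
move=> He Hx o o' [fA [HA ->]] [fB [HB ->]] /=.
have Hnx : [:: x] <> [::] /\ antichain_seq leY [:: x] by split.
pose nx : antichain_node leY := exist _ _ Hnx.
exists nx.
have Hsim : forall (a : antichain_node leX) (b : antichain_node leY) (a' : antichain_node leX), proj1_sig b = x :: map e (proj1_sig a) ->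
    node_child a' a -> exists b', node_child b' b /\ proj1_sig b' = x :: map e (proj1_sig a').
  move=> a b a' Eb [u [un Eu]].
  exists (exist (fun s => s <> [::] /\ antichain_seq leY s) _ (node_img He Hx (proj2 (proj2_sig a')))); split => //=.
  exists (map e u); split; first by case: u un Eu.
  rewrite /= Eu map_cat Eb; done.
suff : forall b ob, has_rank (@node_child Y leY) b ob -> proj1_sig b = [:: x] -> ole (osup fA) ob.
  move=> H; exact: (H nx _ (HB nx) erefl).
move=> b ob Hb; case: Hb => {}b g Hg Eb /= a.
have Hc := node_img He Hx (proj2 (proj2_sig a)).
have Hch : node_child (exist (fun s => s <> [::] /\ antichain_seq leY s) _ Hc) b.
  exists (map e (proj1_sig a)); split => /=; last by rewrite Eb.
  case: (proj2_sig a) => h _; move: h; by case: (proj1_sig a).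
exists (exist (fun y => node_child y b) _ Hch).
exact: (rank_sim Hsim (HA a) (Hg (exist (fun y => node_child y b) _ Hch)) erefl).
Qed.

Lemma emb_inj (A B : wellorder) (g : A -> B) :
  (forall x y, wo_lt x y <-> wo_lt (g x) (g y)) -> forall x y, g x = g y -> x = y.
Proof.
move=> H x y E; case: (wo_total x y) => [h|[h|h]] //.
- move/H: h; rewrite E => h; case: (wo_irr h).
- move/H: h; rewrite E => h; case: (wo_irr h).
Qed.

Lemma map_nonincr (A B : wellorder) (g : A -> B) :
  (forall x y, wo_lt x y <-> wo_lt (g x) (g y)) -> forall s, nonincr s -> nonincr (map g s).
Proof.
move=> H; elim=> [|x s IH] //; case: s IH => [|y s] IH //= [h1 h2]; split.
- by move/H.
- exact: IH.
Qed.

Lemma map_lexlt (A B : wellorder) (g : A -> B) :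
  (forall x y, wo_lt x y <-> wo_lt (g x) (g y)) ->
  forall s t, lexlt (map g s) (map g t) -> lexlt s t.
Proof.
move=> H; elim=> [|x s IH] [|y t] //= [h|[E h]].
- left; exact: (proj2 (H x y) h).
- right; split; [exact: emb_inj E | exact: IH].
Qed.

Lemma lexlt_nil_r (A : wellorder) (s : seq A) : ~ lexlt s [::].
Proof. move=> H; case: s H => [|x s] H; exact: H. Qed.

Lemma app_lexlt (A : wellorder) (m : A) : (forall w, ~ wo_lt w m) ->
  forall s t, lexlt (s ++ [:: m]) (t ++ [:: m]) -> lexlt s t.
Proof.
move=> Hm; elim=> [|x s IH] [|y t] /=.
- move=> [h|[_ h]]; [exact: Hm h | exact: h].
- done.
- move=> [h|[_ h]]; [exact: Hm h | exact: lexlt_nil_r h].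
- move=> [h|[E h]]; [by left | right; split => //; exact: IH].
Qed.

Lemma app_nonincr (A : wellorder) (m : A) : (forall w, ~ wo_lt w m) ->
  forall s, nonincr s -> nonincr (s ++ [:: m]).
Proof.
move=> Hm; elim=> [|x s IH] //; case: s IH => [|y s] IH /=.
- by move=> _; split.
- move=> [h1 h2]; split => //; exact: IH.
Qed.

Lemma bottom_exists (B : wellorder) (b0 : B) : exists m : B, forall w, ~ wo_lt w m.
Proof.
have [m [_ H]] := @exists_min B (@wo_lt B) (fun x y => ~ wo_lt y x) (@wo_wf B)
   (fun x y => classic (wo_lt x y)) (fun _ => True) b0 I.
exists m => w; exact: H.
Qed.

Lemma coord_other (A B : wellorder) : ord_pos A -> ord_eq B A ->
  exists e : omega_pow A -> omega_pow B,
    (forall a b, omega_pow_le (e a) (e b) -> omega_pow_le a b) /\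
    (forall a, proj1_sig (e a) <> [::]).
Proof.
move=> [a0] [f [Hf Hs]].
pose g z := proj1_sig (constructive_indefinite_description _ (Hs z)).
have Hfg : forall z, f (g z) = z by move=> z; rewrite /g; case: constructive_indefinite_description.
have Hg : forall x y, wo_lt x y <-> wo_lt (g x) (g y).
  move=> x y; rewrite Hf !Hfg; done.
have [m Hm] := bottom_exists (g a0).
have Hn : forall a : omega_pow A, nonincr (map g (proj1_sig a) ++ [:: m]).
  move=> a; apply: app_nonincr => //; apply: map_nonincr => //; exact: (proj2_sig a).
exists (fun a => exist _ _ (Hn a)); split.
- move=> a b /= [h|h].
  + left; apply: (map_lexlt Hg); exact: app_lexlt h.
  + right; have h' : map g (proj1_sig a) = map g (proj1_sig b).
      apply: (@rcons_injl _ m); rewrite -!cats1; exact: h.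
    apply: (inj_map (emb_inj Hg)); exact: h'.
- by move=> a /=; case: (map g (proj1_sig a)).
Qed.

Lemma coord_i (A B : wellorder) : ord_lt A B ->
  exists (xb : omega_pow B) (e : omega_pow A -> omega_pow B),
    (forall a b, omega_pow_le (e a) (e b) -> omega_pow_le a b) /\
    (forall a, ~ omega_pow_le xb (e a)).
Proof.
move=> [b [h [Hh Hb]]].
have Hn : forall a : omega_pow A, nonincr (map h (proj1_sig a)).
  move=> a; apply: map_nonincr => //; exact: (proj2_sig a).
have Hxb : nonincr [:: b] by [].
exists (exist _ _ Hxb), (fun a => exist _ _ (Hn a)); split.
- move=> a c /= [H|H].
  + left; exact: map_lexlt H.
  + right; apply: (inj_map (emb_inj Hh)); exact: H.
- move=> a /=; rewrite /omega_pow_le /=.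
  case: (proj1_sig a) => [|y s] /= [H|H] //.
  + have Hy : wo_lt (h y) b by apply/Hb; exists y.
    case: H => [H|[E _]].
    * have := wo_trans H Hy; exact: wo_irr.
    * rewrite -E in Hy; exact: wo_irr Hy.
  + have Hy : wo_lt (h y) b by apply/Hb; exists y.
    case: H => E _; rewrite -E in Hy; exact: wo_irr Hy.
Qed.

Unset Implicit Arguments.

Theorem mainTheorem10 (n : nat) (W W' : 'I_n -> wellorder) (i : 'I_n) :
  2 <= n ->
  (forall j, ord_pos (W j)) ->
  (forall j, j != i -> ord_eq (W' j) (W j)) ->
  ord_lt (W i) (W' i) ->
  exists o o' : Ord,
    width_is (@prod_omega_le n W) o /\
    width_is (@prod_omega_le n W') o' /\
    olt o o'.
Proof.
move=> n2 Hpos Heq Hlt.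
have Hc : forall j : 'I_n, exists p : omega_pow (W' j) * (omega_pow (W j) -> omega_pow (W' j)),
   (forall a b, omega_pow_le (p.2 a) (p.2 b) -> omega_pow_le a b) /\
   (j = i -> forall a, ~ omega_pow_le p.1 (p.2 a)) /\
   (j <> i -> forall a, ~ omega_pow_le (p.2 a) p.1).
  move=> j; case: (eqVneq j i) => [->|ji].
  - have [xb [e [H1 H2]]] := coord_i Hlt; exists (xb, e); split => //; split => //.
  - have [e [H1 H2]] := coord_other (Hpos j) (Heq j ji).
    have Hx : nonincr ([::] : seq (W' j)) by [].
    exists (exist _ _ Hx, e); split => //; split.
    + move=> E; by rewrite E eqxx in ji.
    + move=> _ a /= [h|h].
      * exact: lexlt_nil_r h.
      * exact: H2 h.
pose F j := proj1_sig (constructive_indefinite_description _ (Hc j)).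
have HF : forall j, (forall a b, omega_pow_le ((F j).2 a) ((F j).2 b) -> omega_pow_le a b) /\
   (j = i -> forall a, ~ omega_pow_le (F j).1 ((F j).2 a)) /\
   (j <> i -> forall a, ~ omega_pow_le ((F j).2 a) (F j).1).
  move=> j; rewrite /F; by case: constructive_indefinite_description.
pose x : prod_omega W' := fun j => (F j).1.
pose e (a : prod_omega W) : prod_omega W' := fun j => (F j).2 (a j).
have [k ki] : exists k : 'I_n, k <> i.
  have h0 : 0 < n by apply: leq_trans n2.
  case: (eqVneq (val i) 0) => Hi.
  - exists (Ordinal n2) => E; move: Hi; by rewrite -E.
  - exists (Ordinal h0) => E; move: Hi; by rewrite -E.
have [o Ho] := width_exists (@prod_omega_good n W).
have [o' Ho'] := width_exists (@prod_omega_good n W').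
exists o, o'; split; first exact: Ho.
split; first exact: Ho'.
apply: (@width_lt _ _ _ _ e x _ _ o o' Ho Ho').
- move=> a b H j; apply: (proj1 (HF j)); exact: H.
- move=> a; split => H.
  + exact: (proj1 (proj2 (HF i)) erefl (a i) (H i)).
  + exact: (proj2 (proj2 (HF k)) ki (a k) (H k)).
Qed.
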